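(* Let $\mathcal{M}=\{1,\dots,m\}$, let $Q=(q_{ij})$ be an $m\times m$ generator matrix ($q_{ij}\ge0$ for $i\ne j$, $q_{ii}=-\sum_{j\ne i}q_{ij}$), let $r>0$, and for $i\in\mathcal{M}$ let $N(i),R(i),c(i),h(i)>0$ and $\theta(i)\in\mathbb{R}$. Then the algebraic Riccati equation $$\frac{\varphi^2(i)}{R(i)}+r\varphi(i)-\sum_{j\in\mathcal{M}}q_{ij}\varphi(j)-N(i)=0,\quad i\in\mathcal{M},$$ has a unique solution $(\varphi(1),\dots,\varphi(m))$ with $\varphi(i)\ge0$ for all $i\in\mathcal{M}$, and for this $\varphi$ the linear system $$\Big(r+\frac{\varphi(i)}{R(i)}\Big)\psi(i)-\sum_{j\in\mathcal{M}}q_{ij}\psi(j)-(h(i)-\theta(i))\varphi(i)+N(i)c(i)=0,\quad i\in\mathcal{M},$$ has a unique solution $(\psi(1),\dots,\psi(m))$. *)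

(* Defs.v *)
From mathcomp Require Import all_boot all_order all_algebra.
From mathcomp Require Import reals.
Set Implicit Arguments. Unset Strict Implicit. Unset Printing Implicit Defensive.
Import Order.TTheory GRing.Theory Num.Theory.
Local Open Scope ring_scope.

Definition generator_matrix (R : realType) (m : nat) (Q : 'M[R]_m) : Prop :=
  (forall i j : 'I_m, i != j -> 0 <= Q i j) /\
  (forall i : 'I_m, Q i i = - \sum_(j < m | j != i) Q i j).

Definition riccati_eq (R : realType) (m : nat) (Q : 'M[R]_m) (r : R)
  (Rw N : 'I_m -> R) (phi : 'I_m -> R) : Prop :=
  forall i : 'I_m,
    phi i ^+ 2 / Rw i + r * phi i - \sum_(j < m) Q i j * phi j - N i = 0.

Definition psi_eq (R : realType) (m : nat) (Q : 'M[R]_m) (r : R)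
  (Rw N c h theta : 'I_m -> R) (phi psi : 'I_m -> R) : Prop :=
  forall i : 'I_m,
    (r + phi i / Rw i) * psi i - \sum_(j < m) Q i j * psi j
      - (h i - theta i) * phi i + N i * c i = 0.

(* Main.v *)
Require Import Defs.
From mathcomp Require Import all_boot all_order all_algebra.
From mathcomp Require Import boolp classical_sets reals ring lra.
Import Order.TTheory GRing.Theory Num.Theory.
Local Open Scope ring_scope.
Lemma gen_diag (R : realType) m (Q : 'M[R]_m) i : generator_matrix Q ->
  Q i i <= 0 /\ forall F : 'I_m -> R,
   \sum_j Q i j * F j = Q i i * F i + \sum_(j | j != i) Q i j * F j.
Proof.
case=> Hoff Hd; split.
  rewrite Hd oppr_le0; apply: sumr_ge0 => j ji; apply: Hoff; by rewrite eq_sym.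
by move=> F; rewrite (bigD1 i).
Qed.

Lemma key (R : realType) m (Q : 'M[R]_m) (w x : 'I_m -> R) :
  generator_matrix Q -> (forall i, 0 < w i) ->
  (forall i, w i * x i = \sum_j Q i j * x j) -> forall i, x i = 0.
Proof.
move=> HQ Hw Hx i0.
have [k _ Hk] := @arg_maxP _ _ 'I_m i0 xpredT (fun j => `|x j|) isT.
have [Qkk HS] := @gen_diag R m Q k HQ.
have Hsum : \sum_(j | j != k) Q k j * x j = (w k - Q k k) * x k.
  by rewrite mulrBl Hx HS; ring.
have H1 : (w k - Q k k) * `|x k| <= - Q k k * `|x k|.
  have -> : (w k - Q k k) * `|x k| = `|(w k - Q k k) * x k|.
    by rewrite normrM ger0_norm // subr_ge0; apply: le_trans Qkk _; apply: ltW.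
  rewrite -Hsum; apply: le_trans (ler_norm_sum _ _ _) _.
  have -> : - Q k k = \sum_(j | j != k) Q k j.
    by case: HQ => _ ->; rewrite opprK.
  rewrite mulr_suml; apply: ler_sum => j jk.
  rewrite normrM ger0_norm; last by case: HQ => H _; apply: H; rewrite eq_sym.
  apply: ler_wpM2l; first by case: HQ => H _; apply: H; rewrite eq_sym.
  exact: (Hk j isT).
have : w k * `|x k| <= 0 by lra.
rewrite pmulr_rle0 ?Hw // normr_le0 => /eqP xk0.
by apply/eqP; rewrite -normr_le0 (le_trans (Hk i0 isT)) // xk0 normr0.
Qed.
Section G.
Variables (R : realType) (a w : R).
Hypotheses (ha : 0 < a) (hw : 0 < w).
Definition ff (x : R) := x ^+ 2 / w + a * x.
Definition gg (y : R) := (Num.sqrt (a ^+ 2 * w ^+ 2 + 4 * w * y) - a * w) / 2.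

Lemma gg_ge0 y : 0 <= y -> 0 <= gg y.
Proof.
move=> hy; rewrite /gg divr_ge0 // subr_ge0.
rewrite -(ger0_norm (ltW (mulr_gt0 ha hw))) -sqrtr_sqr ler_sqrt; last first.
  by rewrite addr_ge0 ?mulr_ge0 ?sqr_ge0 // ltW.
by rewrite exprMn lerDl mulr_ge0 // mulr_ge0 // ltW.
Qed.

Lemma gg_mono y y' : 0 <= y -> y <= y' -> gg y <= gg y'.
Proof.
move=> hy hyy; rewrite /gg ler_pM2r ?invr_gt0 // lerD2r ler_sqrt; last first.
  have hy' : 0 <= y' by apply: le_trans hy hyy.
  have := mulr_ge0 (ltW hw) hy'; have := sqr_ge0 (a * w); rewrite exprMn; nra.
by rewrite lerD2l ler_pM2l // mulr_gt0.
Qed.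

Lemma ff_gg y : 0 <= y -> ff (gg y) = y.
Proof.
move=> hy; rewrite /ff /gg.
have hD : 0 <= a ^+ 2 * w ^+ 2 + 4 * w * y.
  by rewrite addr_ge0 ?mulr_ge0 ?sqr_ge0 // ltW.
have hs := sqr_sqrtr hD.
set s := Num.sqrt _ in hs *.
have wn0 : w != 0 by rewrite gt_eqF.
have -> : ((s - a * w) / 2) ^+ 2 / w + a * ((s - a * w) / 2) = (s ^+ 2 - a ^+ 2 * w ^+ 2) / (4 * w).
  by field.
by rewrite hs; field.
Qed.

Lemma gg_ff x : 0 <= x -> gg (ff x) = x.
Proof.
move=> hx; rewrite /gg /ff.
have wn0 : w != 0 by rewrite gt_eqF.
have -> : a ^+ 2 * w ^+ 2 + 4 * w * (x ^+ 2 / w + a * x) = (a * w + 2 * x) ^+ 2.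
  by field.
rewrite sqrtr_sqr ger0_norm; last by have := mulr_gt0 ha hw; lra.
by field.
Qed.
End G.

Lemma riccati_exists (R : realType) (m : nat) (Q : 'M[R]_m) (r : R)
  (N Rw : 'I_m -> R) :
  generator_matrix Q -> 0 < r ->
  (forall i, 0 < N i) -> (forall i, 0 < Rw i) ->
  exists phi, riccati_eq Q r Rw N phi /\ forall i, 0 <= phi i.
Proof.
move=> HQ hr hN hR.
have Hoff : forall i j, j != i -> 0 <= Q i j.
  by move=> i j ji; case: HQ => H _; apply: H; rewrite eq_sym.
pose a i := r - Q i i.
have ha : forall i, 0 < a i.
  by move=> i; have [Qii _] := @gen_diag R m Q i HQ; rewrite /a; lra.
pose G i (phi : 'I_m -> R) := N i + \sum_(j | j != i) Q i j * phi j.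
pose T i (phi : 'I_m -> R) := @gg R (a i) (Rw i) (G i phi).
have G_mono : forall i phi psi, (forall j, phi j <= psi j) -> G i phi <= G i psi.
  move=> i phi psi H; rewrite /G lerD2l; apply: ler_sum => j ji.
  by apply: ler_wpM2l; [apply: Hoff|apply: H].
have G_ge0 : forall i phi, (forall j, 0 <= phi j) -> 0 <= G i phi.
  move=> i phi H; rewrite /G addr_ge0 //; first exact: ltW.
  by apply: sumr_ge0 => j ji; rewrite mulr_ge0 // Hoff.
have T_ge0 : forall i phi, (forall j, 0 <= phi j) -> 0 <= T i phi.
  by move=> i phi H; apply: gg_ge0 => //; apply: G_ge0.
have T_mono : forall i phi psi, (forall j, 0 <= phi j) ->
    (forall j, phi j <= psi j) -> T i phi <= T i psi.
  by move=> i phi psi H0 H; apply: gg_mono => //; [apply: G_ge0|apply: G_mono].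
pose M := (\sum_i N i) / r.
have hNM : forall i, N i <= r * M.
  move=> i; rewrite /M mulrC divfK ?gt_eqF // (bigD1 i) //= lerDl.
  by apply: sumr_ge0 => j _; apply: ltW.
have hM : 0 <= M.
  rewrite /M divr_ge0 //; last exact: ltW.
  by apply: sumr_ge0 => i _; apply: ltW.
have TM : forall i, T i (fun _ => M) <= M.
  move=> i; rewrite -{2}(@gg_ff R (a i) (Rw i) (ha i) (hR i) M hM).
  apply: gg_mono => //; first by apply: G_ge0.
  rewrite /G /ff -mulr_suml.
  have -> : \sum_(j | j != i) Q i j = - Q i i by case: HQ => _ ->; rewrite opprK.
  have := hNM i; have : 0 <= M ^+ 2 / Rw i by rewrite divr_ge0 ?sqr_ge0 ?ltW.
  rewrite /a; lra.
pose S phi := (forall i, 0 <= phi i <= M) /\ (forall i, phi i <= T i phi).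
pose E i := fun x => exists2 phi, S phi & x = phi i.
pose ps i := sup (E i).
have S0 : S (fun _ => 0).
  split=> i; first by rewrite lexx hM.
  by apply: T_ge0.
have ne : forall i, exists x, E i x by move=> i; exists 0; exists (fun _ => 0).
have ub : forall i, ubound (E i) M.
  by move=> i x [phi [H _] ->]; case/andP: (H i).
have le_ps : forall phi i, S phi -> phi i <= ps i.
  by move=> phi i Sphi; apply: (ub_le_sup (ex_intro _ M (ub i))); exists phi.
have ps_ge0 : forall i, 0 <= ps i by move=> i; apply: (le_ps (fun _ => 0)).
have ps_leM : forall i, ps i <= M by move=> i; apply: ge_sup.
have ps_leT : forall i, ps i <= T i ps.
  move=> i; apply: ge_sup => // y [phi Sphi ->].
  apply: le_trans (Sphi.2 i) _; apply: T_mono.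
    by move=> j; case/andP: (Sphi.1 j).
  by move=> j; apply: le_ps.
pose psi i := T i ps.
have Spsi : S psi.
  split=> i.
    rewrite T_ge0 //=; apply: le_trans (TM i); apply: T_mono => //.
  apply: T_mono => //.
have ps_fix : forall i, ps i = T i ps.
  by move=> i; apply/le_anti; rewrite ps_leT /=; apply: (le_ps psi).
exists ps; split => // i.
have e : @ff R (a i) (Rw i) (ps i) = G i ps.
  by rewrite {1}ps_fix ff_gg //; apply: G_ge0.
have [_ HS] := @gen_diag R m Q i HQ.
rewrite HS; transitivity (@ff R (a i) (Rw i) (ps i) - G i ps); last by rewrite e subrr.
by rewrite /ff /G /a; ring.
Qed.

Lemma sum_diff (R : realType) m (Q : 'M[R]_m) i (u v : 'I_m -> R) :
  \sum_j Q i j * (u j - v j) = \sum_j Q i j * u j - \sum_j Q i j * v j.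
Proof. by rewrite -sumrB; apply: eq_bigr => j _; rewrite mulrBr. Qed.

Lemma linsys (R : realType) (m : nat) (Q : 'M[R]_m) (w b : 'I_m -> R) :
  generator_matrix Q -> (forall i, 0 < w i) ->
  exists x : 'I_m -> R, forall i, w i * x i - \sum_j Q i j * x j = b i.
Proof.
move=> HQ hw.
pose A : 'M[R]_m := diag_mx (\row_i w i) - Q.
have Av : forall (v : 'cV[R]_m) i, (A *m v) i 0 = w i * v i 0 - \sum_j Q i j * v j 0.
  by move=> v i; rewrite mulmxBl mul_diag_mx !mxE.
have uA : A \in unitmx.
  rewrite unitmxE unitfE; apply/negP => /eqP hd.
  have /det0P [v vn0 vA] : \det A^T == 0 by rewrite det_tr hd.
  have hv : A *m v^T = 0 by rewrite -[A]trmxK -trmx_mul vA trmx0.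
  have : forall i, v^T i 0 = 0.
    apply: (@key R m Q w) => // i; apply/eqP; rewrite -subr_eq0; apply/eqP.
    by rewrite -Av hv mxE.
  move=> h0; move/negP: vn0; apply; apply/eqP/matrixP => i j.
  by have := h0 j; rewrite !mxE (ord1 i) => ->.
pose bb : 'cV[R]_m := \col_i b i.
exists (fun i => (invmx A *m bb) i 0) => i.
by rewrite -Av mulKVmx // mxE.
Qed.

Theorem lemma5p1 (R : realType) (m : nat) (Q : 'M[R]_m) (r : R)
  (N Rw c h : 'I_m -> R) (theta : 'I_m -> R) :
  generator_matrix Q -> 0 < r ->
  (forall i, 0 < N i) -> (forall i, 0 < Rw i) ->
  (forall i, 0 < c i) -> (forall i, 0 < h i) ->
  exists phi : 'I_m -> R,
    [/\ riccati_eq Q r Rw N phi, (forall i, 0 <= phi i),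
        (forall phi' : 'I_m -> R,
           riccati_eq Q r Rw N phi' -> (forall i, 0 <= phi' i) -> phi' = phi)
      & exists psi : 'I_m -> R,
          psi_eq Q r Rw N c h theta phi psi /\
          (forall psi' : 'I_m -> R, psi_eq Q r Rw N c h theta phi psi' -> psi' = psi)].
Proof.
move=> HQ hr hN hR hc hh.
have [phi [ephi phi0]] := @riccati_exists R m Q r N Rw HQ hr hN hR.
have hw : forall i, 0 < r + phi i / Rw i.
  by move=> i; have := divr_ge0 (phi0 i) (ltW (hR i)); lra.
exists phi; split => //.
  move=> phi' ephi' phi0'; apply: funext => i.
  have hw' : forall i, 0 < r + (phi' i + phi i) / Rw i.
    move=> k; have := divr_ge0 (addr_ge0 (phi0' k) (phi0 k)) (ltW (hR k)); lra.
  have := @key R m Q _ (fun k => phi' k - phi k) HQ hw'.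
  move=> H; apply/eqP; rewrite -subr_eq0; apply/eqP; apply: H => k.
  rewrite sum_diff; have := ephi k; have := ephi' k.
  set s1 := \sum_j _; set s2 := \sum_j _ => E1 E2.
  have -> : s1 = phi' k ^+ 2 / Rw k + r * phi' k - N k by lra.
  have -> : s2 = phi k ^+ 2 / Rw k + r * phi k - N k by lra.
  ring.
have [psi hpsi] := @linsys R m Q (fun i => r + phi i / Rw i)
   (fun i => (h i - theta i) * phi i - N i * c i) HQ hw.
exists psi; split.
  by move=> i; have := hpsi i; lra.
move=> psi' epsi'; apply: funext => i.
have := @key R m Q _ (fun k => psi' k - psi k) HQ hw.
move=> H; apply/eqP; rewrite -subr_eq0; apply/eqP; apply: H => k.
rewrite sum_diff; have := hpsi k; have := epsi' k.
set s1 := \sum_j _; set s2 := \sum_j _ => E1 E2.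
lra.
Qed.
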